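(* Let $\varepsilon>0$ and let $\mathcal{A}\subseteq\mathcal{Z}$ with $z^\star\in\mathcal{A}$ be such that $\Delta_z:=(z^\star-z)^\top\theta^\star\le4\varepsilon$ for every $z\in\mathcal{A}\setminus\{z^\star\}$. Then $$\mathcal{V}^\star_{\mathrm{lin}}(\mathcal{A}:\mathcal{X}-x_1)\le 64\,\boldsymbol\tau^\star_{\mathrm{lin}}(\mathcal{Z}:\mathcal{X}-x_1)\,\varepsilon^2.$$ Consequently, if $\mathbf q\in\Delta^{(K)}$ is arbitrary and $\mathbf p=\tfrac12(\mathbf p_{\mathrm{xor}}(\mathcal{A})+\mathbf q)$, then $\mathcal{V}_{\mathrm{cov}}(\mathcal{A}:\mathcal{X},\mathbf p)\le 512\,\boldsymbol\tau^\star_{\mathrm{lin}}(\mathcal{Z}:\mathcal{X}-x_1)\,\varepsilon^2$.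
   Context: $\mathcal{X}=\{x_1,\dots,x_K\}\subset\mathbb{R}^d$, $\mathcal{Z}\subset\mathbb{R}^d$ finite, $\theta^\star\in\mathbb{R}^d$, $z^\star$ the unique maximizer of $z^\top\theta^\star$ over $\mathcal{Z}$. $\Delta^{(K)}$ is the probability simplex on $[K]$. For $\mathbf p\in\Delta^{(K)}$: $\bar x_{\mathbf p}:=\sum_ip_ix_i$, $\mathbf\Sigma_{\mathrm{cov},\mathbf p}:=\sum_ip_i(x_i-\bar x_{\mathbf p})(x_i-\bar x_{\mathbf p})^\top$, $\mathbf\Sigma_{-1,\mathbf p}:=\sum_ip_i(x_i-x_1)(x_i-x_1)^\top$. For PSD $\mathbf A$, $\|y\|_{\mathbf A^{-1}}:=\lim_{\lambda\to0^+}\sqrt{y^\top(\mathbf A+\lambda\mathbf I_d)^{-1}y}$ (possibly $+\infty$). $\boldsymbol\tau^\star_{\mathrm{lin}}(\mathcal{Z}:\mathcal{X}-x_1):=\min_{\mathbf p\in\Delta^{(K)}}\max_{z\in\mathcal{Z}\setminus\{z^\star\}}\|z^\star-z\|^2_{\mathbf\Sigma_{-1,\mathbf p}^{-1}}/((z^\star-z)^\top\theta^\star)^2$. $\mathcal{V}_{\mathrm{cov}}(\mathcal{A}:\mathcal{X},\mathbf p):=\max_{u,u'\in\mathcal{A}}\|u-u'\|^2_{\mathbf\Sigma_{\mathrm{cov},\mathbf p}^{-1}}$; $\mathcal{V}^\star_{\mathrm{lin}}(\mathcal{A}:\mathcal{X}-x_1):=\min_{\mathbf p\in\Delta^{(K)}}\max_{u,u'\in\mathcal{A}}\|u-u'\|^2_{\mathbf\Sigma_{-1,\mathbf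 p}^{-1}}$. $\mathbf p_{\mathrm{xor}}(\mathcal{A}):=(\tfrac12,\tfrac12\tilde p_2,\dots,\tfrac12\tilde p_K)$, where $\tilde{\mathbf p}\in\Delta^{(K)}$ is a minimizer in the definition of $\mathcal{V}^\star_{\mathrm{lin}}(\mathcal{A}:\mathcal{X}-x_1)$ with $\tilde p_1=0$. *)

(* Defs.v *)
From HB Require Import structures.
From mathcomp Require Import all_boot all_order all_algebra.
From mathcomp Require Import all_classical all_reals all_analysis.
Set Implicit Arguments. Unset Strict Implicit. Unset Printing Implicit Defensive.
Import Order.TTheory GRing.Theory Num.Theory.
Import numFieldNormedType.Exports.
Local Open Scope classical_set_scope.
Local Open Scope ring_scope.

(* Vectors in R^d are column vectors 'cV[R]_d.  The arm set X = {x_1,...,x_K}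
   is a map x : 'I_K -> 'cV_d with K = k.+1; x_1 is x ord0. *)

Section Defs.
Variable R : realType.

Definition simplex (K : nat) : set ('I_K -> R) :=
  [set p | (forall i, 0 <= p i) /\ \sum_(i < K) p i = 1].

Definition quadf (d : nat) (M : 'M[R]_d) (y : 'cV[R]_d) : R :=
  (y^T *m M *m y) 0 0.

(* ||y||^2_{A^{-1}} := lim_{lambda -> 0+} y^T (A + lambda I)^{-1} y, in \bar R
   (possibly +oo) *)
Definition pinvnorm2 (d : nat) (A : 'M[R]_d) (y : 'cV[R]_d) : \bar R :=
  lim ((fun l : R => (quadf (invmx (A + l%:M)) y)%:E) @ 0^'+).

Definition xbar (d K : nat) (x : 'I_K -> 'cV[R]_d) (p : 'I_K -> R) : 'cV[R]_d :=
  \sum_(i < K) p i *: x i.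

Definition Sigma_cov (d K : nat) (x : 'I_K -> 'cV[R]_d) (p : 'I_K -> R)
  : 'M[R]_d :=
  \sum_(i < K) p i *: ((x i - xbar x p) *m (x i - xbar x p)^T).

Definition Sigma_m1 (d k : nat) (x : 'I_k.+1 -> 'cV[R]_d) (p : 'I_k.+1 -> R)
  : 'M[R]_d :=
  \sum_(i < k.+1) p i *: ((x i - x ord0) *m (x i - x ord0)^T).

Definition diam2 (d : nat) (A : seq 'cV[R]_d) (M : 'M[R]_d) : \bar R :=
  \big[maxe/0%E]_(u <- A) \big[maxe/0%E]_(u' <- A) pinvnorm2 M (u - u').

Definition Vcov (d K : nat) (A : seq 'cV[R]_d) (x : 'I_K -> 'cV[R]_d)
  (p : 'I_K -> R) : \bar R := diam2 A (Sigma_cov x p).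

(* V*_lin(A : X - x_1) := min over the simplex (written as inf) *)
Definition Vlin_star (d k : nat) (A : seq 'cV[R]_d) (x : 'I_k.+1 -> 'cV[R]_d)
  : \bar R :=
  ereal_inf [set diam2 A (Sigma_m1 x p) | p in @simplex k.+1].

Definition gap (d : nat) (theta zs z : 'cV[R]_d) : R :=
  ((zs - z)^T *m theta) 0 0.

Definition tau_star (d k : nat) (Z : seq 'cV[R]_d) (zs theta : 'cV[R]_d)
  (x : 'I_k.+1 -> 'cV[R]_d) : \bar R :=
  ereal_inf [set \big[maxe/0%E]_(z <- Z | z != zs)
                   (pinvnorm2 (Sigma_m1 x p) (zs - z) * ((gap theta zs z) ^- 2)%:E)%E
             | p in @simplex k.+1].

(* p_xor(A) built from a minimizer ptil with ptil_1 = 0 *)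
Definition p_xor (k : nat) (ptil : 'I_k.+1 -> R) : 'I_k.+1 -> R :=
  fun i => if i == ord0 then 1 / 2 else ptil i / 2.

End Defs.
Arguments simplex R K : clear implicits.

(* Main.v *)
Require Import Defs.
From HB Require Import structures.
From mathcomp Require Import all_boot all_order all_algebra.
From mathcomp Require Import all_classical all_reals all_analysis.
From mathcomp Require Import ring lra.
Set Implicit Arguments. Unset Strict Implicit. Unset Printing Implicit Defensive.
Import Order.TTheory GRing.Theory Num.Theory.
Local Open Scope classical_set_scope.
Local Open Scope ring_scope.

Definition dotv (R : realType) (d : nat) (u v : 'cV[R]_d) : R := (u^T *m v) 0 0.
Definition bil (R : realType) (d : nat) (P : 'M[R]_d) (u v : 'cV[R]_d) : R :=
  (u^T *m P *m v) 0 0.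

Lemma mx11_mul (R : realType) (n : nat) (a : 'M[R]_(1, n)) (b : 'M[R]_(n, 1)) :
  (a *m b) 0 0 = \sum_j a 0 j * b j 0.
Proof. by rewrite mxE. Qed.

Lemma dotvE (R : realType) (d : nat) (u v : 'cV[R]_d) :
  dotv u v = \sum_j u j 0 * v j 0.
Proof. by rewrite /dotv mxE; apply: eq_bigr => j _; rewrite mxE. Qed.

Lemma dotvC (R : realType) (d : nat) (u v : 'cV[R]_d) : dotv u v = dotv v u.
Proof. by rewrite !dotvE; apply: eq_bigr => j _; rewrite mulrC. Qed.

Lemma dotvBl (R : realType) (d : nat) (u w v : 'cV[R]_d) :
  dotv (u - w) v = dotv u v - dotv w v.
Proof.
by rewrite !dotvE -sumrB; apply: eq_bigr => j _; rewrite !mxE mulrBl.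
Qed.

Lemma dotv_suml (R : realType) (d K : nat) (c : 'I_K -> R) (x : 'I_K -> 'cV[R]_d)
  (v : 'cV[R]_d) :
  dotv (\sum_i c i *: x i) v = \sum_i c i * dotv (x i) v.
Proof.
rewrite dotvE; under eq_bigr do rewrite summxE mulr_suml.
rewrite exchange_big; apply: eq_bigr => i _; rewrite dotvE mulr_sumr.
by apply: eq_bigr => j _; rewrite mxE mulrA.
Qed.

Lemma dotvZl (R : realType) (d : nat) (c : R) (u v : 'cV[R]_d) :
  dotv (c *: u) v = c * dotv u v.
Proof.
rewrite !dotvE mulr_sumr; apply: eq_bigr => j _; by rewrite mxE mulrA.
Qed.

Lemma dotv_ge0 (R : realType) (d : nat) (v : 'cV[R]_d) : 0 <= dotv v v.
Proof. by rewrite dotvE sumr_ge0 // => j _; rewrite -expr2 sqr_ge0. Qed.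

Lemma dotv_gt0 (R : realType) (d : nat) (v : 'cV[R]_d) : v != 0 -> 0 < dotv v v.
Proof.
move=> vn0; rewrite lt_def dotv_ge0 andbT; apply: contraNN vn0 => /eqP.
rewrite dotvE => /psumr_eq0P H; apply/eqP/matrixP => i j.
rewrite (ord1 j) mxE; have /eqP := H (fun i _ => ltac:(by rewrite -expr2 sqr_ge0)) i isT.
by rewrite mulf_eq0 orbb => /eqP.
Qed.

Lemma mxsubE (R : realType) (m n : nat) (M N : 'M[R]_(m, n)) i j :
  (M - N) i j = M i j - N i j.
Proof. by rewrite !mxE. Qed.

Lemma quadfE (R : realType) (d : nat) (M : 'M[R]_d) (v : 'cV[R]_d) :
  quadf M v = bil M v v.
Proof. by []. Qed.

Lemma quadfD (R : realType) (d : nat) (M N : 'M[R]_d) (v : 'cV[R]_d) :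
  quadf (M + N) v = quadf M v + quadf N v.
Proof. by rewrite /quadf mulmxDr mulmxDl mxE. Qed.

Lemma quadfZ (R : realType) (d : nat) (c : R) (M : 'M[R]_d) (v : 'cV[R]_d) :
  quadf (c *: M) v = c * quadf M v.
Proof. by rewrite /quadf -scalemxAr -scalemxAl mxE. Qed.

Lemma quadf_sum (R : realType) (d K : nat) (F : 'I_K -> 'M[R]_d) (v : 'cV[R]_d) :
  quadf (\sum_i F i) v = \sum_i quadf (F i) v.
Proof.
elim/big_ind2: _ => //; last by move=> ? ? ? ? <- <-; rewrite quadfD.
by rewrite /quadf mulmx0 mul0mx mxE.
Qed.

Lemma quadf_outer (R : realType) (d : nat) (w v : 'cV[R]_d) :
  quadf (w *m w^T) v = dotv w v ^+ 2.
Proof.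
rewrite /quadf !mulmxA -(mulmxA _ w^T) mx11_mul big_ord1 -/(dotv w v).
by rewrite -[(v^T *m w) 0 0]/(dotv v w) dotvC expr2.
Qed.

Lemma quadf_scalar (R : realType) (d : nat) (l : R) (v : 'cV[R]_d) :
  quadf (l%:M) v = l * dotv v v.
Proof. by rewrite /quadf mul_mx_scalar -scalemxAl mxE. Qed.

Lemma quadf_scalev (R : realType) (d : nat) (c : R) (M : 'M[R]_d) (v : 'cV[R]_d) :
  quadf M (c *: v) = c ^+ 2 * quadf M v.
Proof.
by rewrite /quadf -scalemxAr [(c *: v)^T]linearZ -!scalemxAl !mxE mulrA expr2.
Qed.

Lemma bil_sym (R : realType) (d : nat) (P : 'M[R]_d) (a b : 'cV[R]_d) :
  P^T = P -> bil P b a = bil P a b.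
Proof.
move=> sP; rewrite /bil -[in RHS](trmxK (a^T *m P *m b)) [in RHS]mxE.
by rewrite !trmx_mul trmxK sP mulmxA.
Qed.

Lemma quadfB (R : realType) (d : nat) (P : 'M[R]_d) (a b : 'cV[R]_d) :
  P^T = P -> quadf P (a - b) = quadf P a - 2 * bil P a b + quadf P b.
Proof.
move=> sP; rewrite /quadf [(a - b)^T]linearB /= mulmxBr !mulmxBl !mxsubE.
rewrite -!/(bil P _ _) (bil_sym _ _ sP); lra.
Qed.

Lemma pd_unit (R : realType) (d : nat) (P : 'M[R]_d) :
  (forall v, v != 0 -> 0 < quadf P v) -> P \in unitmx.
Proof.
move=> pd; rewrite unitmxE unitfE; apply/negP => /det0P [v vn0 vP0].
have : v^T != 0 by rewrite trmx_eq0.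
move/pd; rewrite /quadf trmxK vP0 mul0mx mxE ltxx //.
Qed.

Lemma inv_sym (R : realType) (d : nat) (P : 'M[R]_d) :
  P^T = P -> (invmx P)^T = invmx P.
Proof. by move=> sP; rewrite trmx_inv sP. Qed.

Lemma bil_inv (R : realType) (d : nat) (P : 'M[R]_d) (w y : 'cV[R]_d) :
  P \in unitmx -> bil P w (invmx P *m y) = dotv w y.
Proof. by move=> uP; rewrite /bil -mulmxA (mulmxA P) mulmxV // mul1mx. Qed.

Lemma dotv_inv (R : realType) (d : nat) (P : 'M[R]_d) (y : 'cV[R]_d) :
  P^T = P -> dotv (invmx P *m y) y = quadf (invmx P) y.
Proof. by move=> sP; rewrite /dotv /quadf trmx_mul inv_sym. Qed.

Lemma quadf_inv (R : realType) (d : nat) (P : 'M[R]_d) (y : 'cV[R]_d) :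
  P^T = P -> P \in unitmx -> quadf P (invmx P *m y) = quadf (invmx P) y.
Proof. by move=> sP uP; rewrite quadfE bil_inv // dotv_inv. Qed.

Lemma variational (R : realType) (d : nat) (P : 'M[R]_d) (w y : 'cV[R]_d) :
  P^T = P -> P \in unitmx -> (forall v, 0 <= quadf P v) ->
  2 * dotv w y - quadf P w <= quadf (invmx P) y.
Proof.
move=> sP uP psd; have := psd (w - invmx P *m y).
rewrite quadfB // bil_inv // quadf_inv //; lra.
Qed.

Lemma inv_compare (R : realType) (d : nat) (P Q : 'M[R]_d) (c : R) (y : 'cV[R]_d) :
  P^T = P -> Q^T = Q -> P \in unitmx -> Q \in unitmx ->
  (forall v, 0 <= quadf Q v) -> 0 < c ->
  (forall v, c * quadf Q v <= quadf P v) ->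
  quadf (invmx P) y <= c^-1 * quadf (invmx Q) y.
Proof.
move=> sP sQ uP uQ psdQ c0 le; set w := invmx P *m y.
have hD : dotv w y = quadf (invmx P) y by rewrite dotv_inv.
have hP : quadf P w = quadf (invmx P) y by rewrite quadf_inv.
have := variational (c *: w) y sQ uQ psdQ.
rewrite dotvZl quadf_scalev hD => h1.
have h2 := le w; rewrite hP in h2.
rewrite ler_pdivlMl //.
set a := quadf (invmx P) y in hD hP h1 h2 *; set b := quadf Q w in h1 h2.
set f := quadf (invmx Q) y in h1 *. nra.
Qed.

Lemma reg_sym (R : realType) (d : nat) (M : 'M[R]_d) (l : R) :
  M^T = M -> (M + l%:M)^T = M + l%:M.
Proof. by move=> sM; rewrite linearD /= tr_scalar_mx sM. Qed.

Lemma reg_quadf (R : realType) (d : nat) (M : 'M[R]_d) (l : R) v :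
  quadf (M + l%:M) v = quadf M v + l * dotv v v.
Proof. by rewrite quadfD quadf_scalar. Qed.

Lemma reg_psd (R : realType) (d : nat) (M : 'M[R]_d) (l : R) :
  (forall v, 0 <= quadf M v) -> 0 <= l -> forall v, 0 <= quadf (M + l%:M) v.
Proof.
move=> psd l0 v; rewrite reg_quadf addr_ge0 //; last by rewrite mulr_ge0 // dotv_ge0.
Qed.

Lemma reg_unit (R : realType) (d : nat) (M : 'M[R]_d) (l : R) :
  (forall v, 0 <= quadf M v) -> 0 < l -> M + l%:M \in unitmx.
Proof.
move=> psd l0; apply: pd_unit => v vn0.
by rewrite reg_quadf ltr_wpDl // mulr_gt0 // dotv_gt0.
Qed.

Definition gfun (R : realType) (d : nat) (M : 'M[R]_d) (y : 'cV[R]_d) (l : R) : R :=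
  quadf (invmx (M + l%:M)) y.

Lemma gfun_ge0 (R : realType) (d : nat) (M : 'M[R]_d) y l :
  M^T = M -> (forall v, 0 <= quadf M v) -> 0 < l -> 0 <= gfun M y l.
Proof.
move=> sM psd l0; rewrite /gfun -quadf_inv ?reg_sym ?reg_unit //.
by apply: reg_psd => //; exact: ltW.
Qed.

Lemma gfun_noninc (R : realType) (d : nat) (M : 'M[R]_d) y r s :
  M^T = M -> (forall v, 0 <= quadf M v) -> 0 < r -> r <= s ->
  gfun M y s <= gfun M y r.
Proof.
move=> sM psd r0 rs; have s0 : 0 < s by apply: lt_le_trans rs.
rewrite /gfun; have := @inv_compare R d (M + s%:M) (M + r%:M) 1 y.
rewrite invr1 mul1r; apply; rewrite ?reg_sym ?reg_unit //.
- by apply: reg_psd => //; exact: ltW.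
- move=> v; rewrite mul1r !reg_quadf lerD2l ler_wpM2r // dotv_ge0 //.
Qed.

Lemma pn_sup (R : realType) (d : nat) (M : 'M[R]_d) (y : 'cV[R]_d) :
  M^T = M -> (forall v, 0 <= quadf M v) ->
  pinvnorm2 M y = ereal_sup [set (gfun M y l)%:E | l in [set l | 0 < l]].
Proof.
move=> sM psd.
have H := @nonincreasing_at_right_cvge R (fun l => (gfun M y l)%:E) 0 (BInfty _ false).
rewrite /pinvnorm2; apply: cvg_lim => //.
have -> : [set (gfun M y l)%:E | l in [set l | 0 < l]] =
  (fun l => (gfun M y l)%:E) @` [set` Interval (BRight 0) (BInfty R false)].
  by congr image; apply/seteqP; split => l /=; rewrite in_itv /= andbT.
apply: H => //.
move=> r s; rewrite !in_itv /= !andbT => r0 s0 rs.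
by rewrite lee_fin; apply: gfun_noninc.
Qed.

Lemma mxoppE (R : realType) (m n : nat) (M : 'M[R]_(m, n)) i j :
  ((- M) i j = - M i j)%R.
Proof. by rewrite !mxE. Qed.

Lemma quadf_sub_le (R : realType) (d : nat) (N : 'M[R]_d) (a b : 'cV[R]_d) :
  N^T = N -> (forall v, (0 <= quadf N v)%R) ->
  (quadf N (a - b) <= 2 * quadf N a + 2 * quadf N b)%R.
Proof.
move=> sN psd; have := psd (a - - b); rewrite !quadfB //.
have -> : quadf N (- b) = quadf N b.
  by rewrite -scaleN1r quadf_scalev expr2 mulN1r opprK mul1r.
have -> : bil N a (- b) = - bil N a b by rewrite /bil mulmxN mxoppE.
move=> h; lra.
Qed.


Local Open Scope ereal_scope.

Lemma pn_ge0 (R : realType) (d : nat) (M : 'M[R]_d) (y : 'cV[R]_d) :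
  M^T = M -> (forall v, (0 <= quadf M v)%R) -> 0 <= pinvnorm2 M y.
Proof.
move=> sM psd; rewrite pn_sup //.
apply: (@le_trans _ _ (gfun M y 1%R)%:E).
  by rewrite lee_fin; apply: (@gfun_ge0 _ _ M y 1%R) => //; exact: ltr01.
by apply: ereal_sup_ubound; exists 1%R => //=; exact: ltr01.
Qed.

Lemma pn_scale (R : realType) (d : nat) (M N : 'M[R]_d) (c : R) (y : 'cV[R]_d) :
  M^T = M -> (forall v, (0 <= quadf M v)%R) ->
  N^T = N -> (forall v, (0 <= quadf N v)%R) -> (0 < c)%R ->
  (forall v, (c * quadf N v <= quadf M v)%R) ->
  pinvnorm2 M y <= (c^-1)%:E * pinvnorm2 N y.
Proof.
move=> sM psdM sN psdN c0 le; rewrite (pn_sup _ sM psdM) (pn_sup _ sN psdN).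
apply: ge_ereal_sup => _ [l /= l0 <-].
have lc0 : (0 < l / c)%R by rewrite divr_gt0.
apply: (@le_trans _ _ ((c^-1 * gfun N y (l / c))%R)%:E).
  rewrite lee_fin /gfun; apply: inv_compare; rewrite ?reg_sym ?reg_unit //.
  - by apply: reg_psd => //; exact: ltW.
  - move=> v; rewrite !reg_quadf mulrDr mulrA mulrCA divff ?gt_eqF // mulr1.
    by rewrite lerD2r.
rewrite EFinM lee_wpmul2l //; first by rewrite lee_fin invr_ge0 ltW.
by apply: ereal_sup_ubound; exists (l / c)%R.
Qed.

Lemma pn_sub (R : realType) (d : nat) (M : 'M[R]_d) (a b : 'cV[R]_d) :
  M^T = M -> (forall v, (0 <= quadf M v)%R) ->
  pinvnorm2 M (a - b) <= 2%:E * (pinvnorm2 M a + pinvnorm2 M b).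
Proof.
move=> sM psd; rewrite !pn_sup //; apply: ge_ereal_sup => _ [l /= l0 <-].
have sN : (invmx (M + l%:M))^T = invmx (M + l%:M) by rewrite inv_sym ?reg_sym.
have psdN : forall v, (0 <= quadf (invmx (M + l%:M)) v)%R.
  move=> v; rewrite -quadf_inv ?reg_sym ?reg_unit //.
  by apply: reg_psd => //; exact: ltW.
apply: (@le_trans _ _ (2%:E * ((gfun M a l)%:E + (gfun M b l)%:E))).
  by rewrite -EFinD -EFinM lee_fin mulrDr; apply: quadf_sub_le.
rewrite lee_wpmul2l ?lee_fin //; apply: leeD; apply: ereal_sup_ubound; by exists l.
Qed.

Lemma pn_zero (R : realType) (d : nat) (M : 'M[R]_d) :
  M^T = M -> (forall v, (0 <= quadf M v)%R) -> pinvnorm2 M 0 = 0.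
Proof.
move=> sM psd; apply/eqP; rewrite eq_le pn_ge0 // andbT pn_sup //.
apply: ge_ereal_sup => _ [l /= l0 <-].
by rewrite /gfun /quadf mulmx0 mxE.
Qed.

Local Close Scope ereal_scope.

Lemma expand_sum (R : realType) (n : nat) (w b : 'I_n -> R) (t : R) :
  \sum_i w i = 1 ->
  \sum_i w i * (b i - t) ^+ 2 =
  \sum_i w i * b i ^+ 2 - 2 * t * \sum_i w i * b i + t ^+ 2.
Proof.
move=> w1.
have -> : \sum_i w i * (b i - t) ^+ 2 =
  \sum_i (w i * b i ^+ 2 - 2 * t * (w i * b i) + t ^+ 2 * w i).
  by apply: eq_bigr => i _; ring.
rewrite big_split sumrB /= -!mulr_sumr w1 mulr1 //.
Qed.

Lemma cs_sum (R : realType) (n : nat) (w b : 'I_n -> R) :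
  (forall i, 0 <= w i) -> \sum_i w i = 1 ->
  (\sum_i w i * b i) ^+ 2 <= \sum_i w i * b i ^+ 2.
Proof.
move=> w0 w1; set S1 := \sum_i w i * b i.
have : 0 <= \sum_i w i * (b i - S1) ^+ 2.
  by apply: sumr_ge0 => i _; rewrite mulr_ge0 // sqr_ge0.
rewrite expand_sum // -/S1; nra.
Qed.

Lemma scalar_ineq (R : realType) (k : nat) (a ptil q : 'I_k.+1 -> R) (m : R) :
  (forall i, 0 <= ptil i) -> \sum_i ptil i = 1 -> ptil ord0 = 0 ->
  (forall i, 0 <= q i) ->
  \sum_i ptil i * (a i - a ord0) ^+ 2 / 8 <=
  \sum_i ((p_xor ptil i + q i) / 2) * (a i - m) ^+ 2.
Proof.
move=> p0 p1 p00 q0.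
have step1 : (a ord0 - m) ^+ 2 / 4 + (\sum_i ptil i * (a i - m) ^+ 2) / 4 <=
   \sum_i ((p_xor ptil i + q i) / 2) * (a i - m) ^+ 2.
  rewrite big_ord_recl [X in _ <= X]big_ord_recl p00 /p_xor eqxx mul0r add0r.
  rewrite mulr_suml; apply: lerD.
    have := q0 ord0; have := sqr_ge0 (a ord0 - m); nra.
  apply: ler_sum => i _; rewrite eq_sym (negbTE (neq_lift ord0 i)).
  have := q0 (lift ord0 i); have := sqr_ge0 (a (lift ord0 i) - m);
  have := p0 (lift ord0 i); nra.
apply: le_trans step1.
have e := expand_sum (fun i => a i - a ord0) (m - a ord0) p1.
have -> : \sum_i ptil i * (a i - m) ^+ 2 =
   \sum_i ptil i * ((a i - a ord0) - (m - a ord0)) ^+ 2.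
  by apply: eq_bigr => i _; congr (_ * _); congr (_ ^+ _); ring.
rewrite e -mulr_suml.
have cs := cs_sum (fun i => a i - a ord0) p0 p1.
set S2 := \sum_i ptil i * (a i - a ord0) ^+ 2 in cs *.
set S1 := \sum_i ptil i * (a i - a ord0) in cs *.
have -> : a ord0 - m = - (m - a ord0) by ring.
set t := m - a ord0. have := sqr_ge0 (S1 - 2 * t). rewrite sqrrN. nra.
Qed.

Lemma outer_sym (R : realType) (d K : nat) (c : 'I_K -> R) (w : 'I_K -> 'cV[R]_d) :
  (\sum_i c i *: (w i *m (w i)^T))^T = \sum_i c i *: (w i *m (w i)^T).
Proof.
rewrite linear_sum /=; apply: eq_bigr => i _.
by rewrite linearZ /= trmx_mul trmxK.
Qed.

Lemma outer_quadf (R : realType) (d K : nat) (c : 'I_K -> R) (w : 'I_K -> 'cV[R]_d) v :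
  quadf (\sum_i c i *: (w i *m (w i)^T)) v = \sum_i c i * dotv (w i) v ^+ 2.
Proof.
by rewrite quadf_sum; apply: eq_bigr => i _; rewrite quadfZ quadf_outer.
Qed.

Lemma outer_psd (R : realType) (d K : nat) (c : 'I_K -> R) (w : 'I_K -> 'cV[R]_d) :
  (forall i, 0 <= c i) -> forall v, 0 <= quadf (\sum_i c i *: (w i *m (w i)^T)) v.
Proof.
move=> c0 v; rewrite outer_quadf; apply: sumr_ge0 => i _.
by rewrite mulr_ge0 // sqr_ge0.
Qed.

Lemma cov_ge (R : realType) (d k : nat) (x : 'I_k.+1 -> 'cV[R]_d)
  (ptil q : 'I_k.+1 -> R) :
  (forall i, 0 <= ptil i) -> \sum_i ptil i = 1 -> ptil ord0 = 0 ->
  (forall i, 0 <= q i) -> forall v,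
  8^-1 * quadf (Sigma_m1 x ptil) v <=
  quadf (Sigma_cov x (fun i => (p_xor ptil i + q i) / 2)) v.
Proof.
move=> p0 p1 p00 q0 v; rewrite /Sigma_m1 /Sigma_cov !outer_quadf.
set p := fun i => _.
under eq_bigr do rewrite dotvBl.
under [X in _ <= X]eq_bigr do rewrite dotvBl /xbar dotv_suml.
rewrite mulrC mulr_suml.
exact: (@scalar_ineq R k (fun i => dotv (x i) v) ptil q _ p0 p1 p00 q0).
Qed.

Local Open Scope ereal_scope.

Lemma seqmax_le (R : realType) (T : eqType) (s : seq T) (F : T -> \bar R) (C : \bar R) :
  0 <= C -> (forall u, u \in s -> F u <= C) -> \big[maxe/0]_(u <- s) F u <= C.
Proof.
move=> C0 H; rewrite big_seq_cond; apply: bigmax_le => // u /andP [us _].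
exact: H.
Qed.

Lemma seqmax_ge0 (R : realType) (T : eqType) (s : seq T) (P : pred T) (F : T -> \bar R) :
  0 <= \big[maxe/0]_(u <- s | P u) F u.
Proof. exact: bigmax_ge_id. Qed.

Lemma pn_zs (R : realType) (d : nat) (M : 'M[R]_d) (Z A : seq 'cV[R]_d)
  (theta zs : 'cV[R]_d) (eps : R) (T : \bar R) :
  M^T = M -> (forall v, (0 <= quadf M v)%R) -> (0 < eps)%R ->
  {subset A <= Z} ->
  (forall z, z \in Z -> z != zs -> (0 < gap theta zs z)%R) ->
  (forall z, z \in A -> z != zs -> (gap theta zs z <= 4 * eps)%R) ->
  0 <= T ->
  (forall z, z \in Z -> z != zs ->
     pinvnorm2 M (zs - z) * ((gap theta zs z) ^- 2)%:E <= T) ->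
  forall z, z \in A -> pinvnorm2 M (zs - z) <= T * (16 * eps ^+ 2)%:E.
Proof.
move=> sM psd e0 AZ gpos hgap T0 hT z zA.
have [->|nz] := eqVneq z zs.
  by rewrite subrr pn_zero // mule_ge0 // lee_fin mulr_ge0 // sqr_ge0.
have zZ := AZ z zA; have g0 := gpos z zZ nz; have g4 := hgap z zA nz.
set g := gap theta zs z in g0 g4 hT *.
have -> : pinvnorm2 M (zs - z) =
    pinvnorm2 M (zs - z) * (g ^- 2)%:E * (g ^+ 2)%:E.
  by rewrite -muleA -EFinM mulVf ?mule1 // expf_neq0 // gt_eqF.
apply: (@le_trans _ _ (T * (g ^+ 2)%:E)).
  by apply: lee_wpmul2r; [rewrite lee_fin sqr_ge0 | exact: hT].
apply: lee_wpmul2l => //; rewrite lee_fin.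
have : (g ^+ 2 <= (4 * eps) ^+ 2)%R by rewrite lerXn2r // ?nnegrE ltW // mulr_gt0.
by rewrite exprMn; lra.
Qed.

Lemma diam_bound (R : realType) (d : nat) (M : 'M[R]_d) (Z A : seq 'cV[R]_d)
  (theta zs : 'cV[R]_d) (eps : R) (T : \bar R) :
  M^T = M -> (forall v, (0 <= quadf M v)%R) -> (0 < eps)%R ->
  {subset A <= Z} ->
  (forall z, z \in Z -> z != zs -> (0 < gap theta zs z)%R) ->
  (forall z, z \in A -> z != zs -> (gap theta zs z <= 4 * eps)%R) ->
  0 <= T ->
  (forall z, z \in Z -> z != zs ->
     pinvnorm2 M (zs - z) * ((gap theta zs z) ^- 2)%:E <= T) ->
  diam2 A M <= (64 * eps ^+ 2)%:E * T.
Proof.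
move=> sM psd e0 AZ gpos hgap T0 hT.
have h1 := pn_zs sM psd e0 AZ gpos hgap T0 hT.
have e2 : (0 < eps ^+ 2)%R by rewrite exprn_gt0.
case: T T0 hT h1 => [t| |] T0 hT h1; last by [].
  have t0 : (0 <= t)%R by rewrite -lee_fin.
  have C0 : 0 <= (64 * eps ^+ 2)%:E * t%:E.
    by rewrite -EFinM lee_fin mulr_ge0 // mulr_ge0 // ltW.
  rewrite /diam2; apply: seqmax_le => // u uA; apply: seqmax_le => // u' u'A.
  have -> : (u - u' = (zs - u') - (zs - u))%R by rewrite opprB [RHS]addrC addrA subrK.
  apply: le_trans (pn_sub _ _ sM psd) _.
  have a1 := h1 u' u'A; have a2 := h1 u uA.
  rewrite -EFinM in a1 a2.
  apply: (@le_trans _ _ (2%:E * ((t * (16 * eps ^+ 2))%:E + (t * (16 * eps ^+ 2))%:E))).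
    by apply: lee_wpmul2l => //; apply: leeD.
  by rewrite -EFinD -!EFinM lee_fin; lra.
by rewrite gt0_muley ?leey // lte_fin mulr_gt0.
Qed.
Local Close Scope ereal_scope.

Lemma gap_pos (R : realType) (d : nat) (Z : seq 'cV[R]_d) (theta zs : 'cV[R]_d) :
  (forall z, z \in Z -> z != zs -> ((z^T *m theta) 0 0 < (zs^T *m theta) 0 0)%R) ->
  forall z, z \in Z -> z != zs -> (0 < gap theta zs z)%R.
Proof.
move=> H z zZ nz; rewrite /gap [(zs - z)^T]linearB /= mulmxBl mxsubE.
by rewrite subr_gt0 H.
Qed.

Theorem mainTheorem7 (R : realType) (d k : nat) (x : 'I_k.+1 -> 'cV[R]_d)
  (Z : seq 'cV[R]_d) (theta zs : 'cV[R]_d)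
  (zsZ : zs \in Z)
  (zs_uniq : forall z, z \in Z -> z != zs ->
     ((z^T *m theta) 0 0 < (zs^T *m theta) 0 0))
  (eps : R) (eps_gt0 : 0 < eps)
  (A : seq 'cV[R]_d) (AZ : {subset A <= Z}) (zsA : zs \in A)
  (hgap : forall z, z \in A -> z != zs -> gap theta zs z <= 4 * eps) :
  (Vlin_star A x <= (64 * eps ^+ 2)%:E * tau_star Z zs theta x)%E /\
  (forall ptil : 'I_k.+1 -> R, ptil \in simplex R k.+1 -> ptil ord0 = 0 ->
     diam2 A (Sigma_m1 x ptil) = Vlin_star A x ->
   forall q : 'I_k.+1 -> R, q \in simplex R k.+1 ->
     (Vcov A x (fun i => ((p_xor ptil i + q i) / 2)%R)
        <= (512 * eps ^+ 2)%:E * tau_star Z zs theta x)%E).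
Proof.
have gpos := gap_pos zs_uniq.
have c0 : (0 < 64 * eps ^+ 2)%R by rewrite mulr_gt0 // exprn_gt0.
have part1 : (Vlin_star A x <= (64 * eps ^+ 2)%:E * tau_star Z zs theta x)%E.
  rewrite -lee_pdivrMl //; apply: le_ereal_inf_tmp => _ [p /= [p0 p1] <-].
  rewrite lee_pdivrMl //.
  apply: (@le_trans _ _ (diam2 A (Sigma_m1 x p))).
    by apply: ereal_inf_lbound; exists p.
  apply: (@diam_bound _ _ _ Z A theta zs) => //.
  - exact: outer_sym.
  - exact: outer_psd.
  - exact: bigmax_ge_id.
  - move=> z zZ nz; rewrite big_seq_cond.
    by apply: (le_bigmax_seq _ _ _ _ zZ) => /=; rewrite zZ nz.
split => // ptil /set_mem [pt0 pt1] pt00 hmin q /set_mem [q0 q1].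
have V0 : (0 <= Vlin_star A x)%E by rewrite -hmin; exact: seqmax_ge0.
have p0 : forall i, (0 <= (p_xor ptil i + q i) / 2)%R.
  move=> i; rewrite divr_ge0 // addr_ge0 // /p_xor; case: (i == ord0) => //.
  by rewrite divr_ge0.
apply: (@le_trans _ _ (8%:E * Vlin_star A x)%E).
  rewrite /Vcov /diam2; apply: seqmax_le; first by rewrite mule_ge0.
  move=> u uA; apply: seqmax_le; first by rewrite mule_ge0.
  move=> u' u'A.
  apply: le_trans.
    apply: (@pn_scale _ _ _ (Sigma_m1 x ptil) (8^-1)%R).
    - exact: outer_sym.
    - exact: outer_psd.
    - exact: outer_sym.
    - exact: outer_psd.
    - by rewrite invr_gt0.
    - exact: cov_ge.
  rewrite invrK lee_wpmul2l // -hmin /diam2.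
  apply: le_trans (le_bigmax_seq _ _ _ _ uA isT).
  exact: (le_bigmax_seq _ _ _ _ u'A isT).
apply: (@le_trans _ _ (8%:E * ((64 * eps ^+ 2)%:E * tau_star Z zs theta x))%E).
  by apply: lee_wpmul2l.
rewrite muleA -EFinM.
have -> : (8 * (64 * eps ^+ 2) = 512 * eps ^+ 2)%R by lra.
by [].
Qed.
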